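(* Let $G=(V,E)$ be a finite graph. (i) For every $z>0$ the fixed point equation $\mathbf{X}=z\mathcal{R}_G(\mathbf{X})$ on $[0,\infty)^{\vec E}$ has a unique solution $\mathbf{Y}(z)\in(0,\infty)^{\vec E}$, and it is attractive: the iterates $\mathbf{X}^0=0$, $\mathbf{X}^{t+1}=z\mathcal{R}_G(\mathbf{X}^t)$ converge to $\mathbf{Y}(z)$. (ii) The map $z\mapsto\mathbf{Y}(z)$ is non-decreasing and $z\mapsto\mathbf{Y}(z)/z$ is non-increasing on $(0,\infty)$ (componentwise). (iii) If moreover $G$ is a tree, then for every $e\in E$ and either orientation $\vec e$ of $e$, $$\mu^z_G(B_e=1)=\frac{Y_{\vec e}(z)\mathcal{R}_{-\vec e}(\mathbf{Y}(z))}{1+Y_{\vec e}(z)\mathcal{R}_{-\vec e}(\mathbf{Y}(z))}.$$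
   Context: $\vec E$: directed edges of $G$ ($u\to v$, $v\to u$ per edge $uv$), $-\vec e$ the reverse of $\vec e$; $\partial u$: neighbours of $u$; empty sums are $0$. $\mathcal{R}_G:[0,\infty)^{\vec E}\to[0,1]^{\vec E}$ is defined by $\mathcal{R}_G(\mathbf{X})_{u\to v}=\mathcal{R}_{u\to v}(\mathbf{X})=1/(1+\sum_{w\in\partial u\setminus v}X_{w\to u})$, and $z\mathcal{R}_G$ multiplies each component by $z$. Comparisons of vectors are componentwise. The Gibbs measure on matchings ($\mathbf{B}\in\{0,1\}^E$ with at most one edge of $\mathbf{B}$ at each vertex) is $\mu^z_G(\mathbf{B})=z^{\sum_eB_e}/P_G(z)$, $P_G(z)$ the normalising constant. *)

(* Defs.v *)
From Stdlib Require Import Reals.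
From mathcomp Require Import all_boot.

Set Implicit Arguments.
Unset Strict Implicit.
Unset Printing Implicit Defensive.

Local Open Scope R_scope.

Definition simple_graph (T : finType) (adj : rel T) : Prop :=
  (forall u v, adj u v = adj v u) /\ (forall u, adj u u = false).

(* Vectors indexed by directed edges u -> v are functions X : T -> T -> R,
   X u v = X_{u -> v}; only their values on directed edges (adj u v) matter. *)

Definition Rmap (T : finType) (adj : rel T) (X : T -> T -> R) (u v : T) : R :=
  1 / (1 + \big[Rplus/0]_(w | adj u w && (w != v)) X w u).

Definition zRmap (T : finType) (adj : rel T) (z : R) (X : T -> T -> R)
  : T -> T -> R := fun u v => z * Rmap adj X u v.

Fixpoint BP_iter (T : finType) (adj : rel T) (z : R) (t : nat) : T -> T -> R :=
  match t with
  | O => fun _ _ => 0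
  | S t' => zRmap adj z (BP_iter adj z t')
  end.

Definition is_edge (T : finType) (adj : rel T) (e : {set T}) : bool :=
  [exists u, exists v, adj u v && (e == [set u; v])].

Definition is_matching (T : finType) (adj : rel T) (M : {set {set T}}) : bool :=
  [forall e in M, is_edge adj e] &&
  [forall x, (#|[set e in M | x \in e]| <= 1)%N].

Definition matching_poly (T : finType) (adj : rel T) (z : R) : R :=
  \big[Rplus/0]_(M : {set {set T}} | is_matching adj M) z ^ #|M|.

Definition edge_prob (T : finType) (adj : rel T) (z : R) (e : {set T}) : R :=
  (\big[Rplus/0]_(M : {set {set T}} | is_matching adj M && (e \in M)) z ^ #|M|)
  / matching_poly adj z.

Definition connected_graph (T : finType) (adj : rel T) : Prop :=
  forall u v : T, connect adj u v.

Definition has_cycle (T : finType) (adj : rel T) : Prop :=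
  exists s : seq T, [/\ uniq s, (3 <= size s)%N & cycle adj s].

Definition is_tree (T : finType) (adj : rel T) : Prop :=
  connected_graph adj /\ ~ has_cycle adj.

(* Main.v *)
Require Import Defs.
From HB Require Import structures.
From Stdlib Require Import Reals Lra Psatz ClassicalEpsilon.
From mathcomp Require Import all_boot zify.
Local Open Scope R_scope.
Set Implicit Arguments. Unset Strict Implicit.
Lemma RplusA : associative Rplus. Proof. by move=> a b c; rewrite Rplus_assoc. Qed.
Lemma RmultA : associative Rmult. Proof. by move=> a b c; rewrite Rmult_assoc. Qed.
HB.instance Definition _ := Monoid.isComLaw.Build R 0 Rplus RplusA Rplus_comm Rplus_0_l.
HB.instance Definition _ := Monoid.isComLaw.Build R 1 Rmult RmultA Rmult_comm Rmult_1_l.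
HB.instance Definition _ := Monoid.isMulLaw.Build R 0 Rmult Rmult_0_l Rmult_0_r.
HB.instance Definition _ := Monoid.isAddLaw.Build R Rmult Rplus Rmult_plus_distr_r Rmult_plus_distr_l.

Section Analytic.
Variables (T : finType) (adj : rel T).
Hypothesis adj_sym : forall u v, adj u v = adj v u.

Definition sumR (X : T -> T -> R) (u v : T) : R :=
  \big[Rplus/0]_(w | adj u w && (w != v)) X w u.

Lemma RmapE X u v : Rmap adj X u v = 1 / (1 + sumR X u v).
Proof. by []. Qed.

Definition enn (X : T -> T -> R) := forall a b, adj a b -> 0 <= X a b.
Definition ele (X Y : T -> T -> R) := forall a b, adj a b -> X a b <= Y a b.

Lemma sumR_nonneg X : enn X -> forall u v, 0 <= sumR X u v.
Proof.
move=> HX u v; rewrite /sumR; apply: big_ind => //; first lra.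
- by move=> x y; lra.
- move=> w /andP [Huw _]; apply: HX; by rewrite adj_sym.
Qed.

Lemma sumR_le X Y : ele X Y -> forall u v, sumR X u v <= sumR Y u v.
Proof.
move=> HX u v; rewrite /sumR; apply: (big_ind2 (fun x y => x <= y)) => //; first lra.
- by move=> x1 x2 y1 y2; lra.
- move=> w /andP [Huw _]; apply: HX; by rewrite adj_sym.
Qed.

Lemma sumR_scale X Y (a b : R) : (forall a' b', adj a' b' -> a * X a' b' <= b * Y a' b') ->
  forall u v, a * sumR X u v <= b * sumR Y u v.
Proof.
move=> HX u v; rewrite /sumR; apply: (big_ind2 (fun x y => a * x <= b * y)) => //; first lra.
- by move=> x1 x2 y1 y2; nra.
- move=> w /andP [Huw _]; apply: HX; by rewrite adj_sym.
Qed.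

Lemma sumR_ext X Y : (forall a b, adj a b -> X a b = Y a b) -> forall u v, sumR X u v = sumR Y u v.
Proof.
move=> HX u v; rewrite /sumR; apply: eq_bigr => w /andP [Huw _]; apply: HX; by rewrite adj_sym.
Qed.

Lemma Rmap_ext X Y : (forall a b, adj a b -> X a b = Y a b) -> forall u v, Rmap adj X u v = Rmap adj Y u v.
Proof. by move=> HX u v; rewrite !RmapE (sumR_ext HX). Qed.

Lemma zRmap_ext z X Y : (forall a b, adj a b -> X a b = Y a b) -> forall u v, zRmap adj z X u v = zRmap adj z Y u v.
Proof. by move=> HX u v; rewrite /zRmap (Rmap_ext HX). Qed.

Lemma inv_bounds s : 0 <= s -> 0 < 1 / (1 + s) <= 1.
Proof.
move=> hs; split; first by apply: Rdiv_lt_0_compat; lra.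
apply (Rmult_le_reg_r (1 + s)); first lra.
rewrite /Rdiv Rmult_assoc Rinv_l; lra.
Qed.

Lemma inv_anti s t : 0 <= s -> s <= t -> 1 / (1 + t) <= 1 / (1 + s).
Proof.
move=> hs hst; rewrite /Rdiv !Rmult_1_l; apply: Rinv_le_contravar; lra.
Qed.

Lemma Rmap_bounds X u v : enn X -> 0 < Rmap adj X u v <= 1.
Proof. move=> HX; rewrite RmapE; apply: inv_bounds; exact: sumR_nonneg. Qed.

Lemma Rmap_anti X Y u v : enn X -> ele X Y -> Rmap adj Y u v <= Rmap adj X u v.
Proof.
move=> HX HXY; rewrite !RmapE; apply: inv_anti; first exact: sumR_nonneg.
exact: sumR_le.
Qed.

Section Z.
Variable z : R.
Hypothesis zpos : 0 < z.

Notation F := (zRmap adj z).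
Notation X := (BP_iter adj z).

Lemma F_bounds Y u v : enn Y -> 0 < F Y u v <= z.
Proof.
move=> HY; have := Rmap_bounds u v HY; rewrite /zRmap; nra.
Qed.

Lemma F_anti Y Y' u v : enn Y -> ele Y Y' -> F Y' u v <= F Y u v.
Proof.
move=> HY HYY; have := Rmap_anti u v HY HYY; rewrite /zRmap; nra.
Qed.

Lemma X_bounds t u v : 0 <= X t u v <= z.
Proof.
elim: t u v => [|t IH] u v /=; first lra.
have := F_bounds u v (Y := X t) (fun a b _ => proj1 (IH a b)); lra.
Qed.

Lemma X_enn t : enn (X t).
Proof. by move=> a b _; case: (X_bounds t a b). Qed.

Definition Br t (Y : T -> T -> R) :=
  forall a b, adj a b -> X (t.*2) a b <= Y a b <= X (t.*2).+1 a b.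

Lemma Br_step t Y : Br t Y -> Br t.+1 (F (F Y)).
Proof.
move=> HB a b hab.
have HYn : enn Y by move=> a' b' h; have := HB a' b' h; have := X_bounds (t.*2) a' b'; lra.
have e1 : ele (X t.*2) Y by move=> a' b' h; case: (HB a' b' h).
have e2 : ele Y (X t.*2.+1) by move=> a' b' h; case: (HB a' b' h).
have HFn : enn (F Y) by move=> a' b' _; have := F_bounds a' b' HYn; lra.
have f1 : ele (F (X t.*2.+1)) (F Y) by move=> a' b' _; apply: F_anti.
have f2 : ele (F Y) (F (X t.*2)) by move=> a' b' _; apply: F_anti => //; apply: X_enn.
split.
- change (F (F (X t.*2)) a b <= F (F Y) a b); apply: F_anti => //.
- change (F (F Y) a b <= F (F (X t.*2.+1)) a b); apply: F_anti => //.
  by move=> a' b' _; have := F_bounds a' b' (X_enn t.*2.+1); lra.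
Qed.

Lemma Br_X t n : (t.*2 <= n)%N -> Br t (X n).
Proof.
elim: t n => [|t IH] n hn.
- move=> a b hab; split; first by case: (X_bounds n a b).
  case: n {hn} => [|n] /=; first by have := X_bounds 1 a b; simpl; lra.
  apply: F_anti; first by move=> ? ? _; lra.
  by move=> a' b' _; case: (X_bounds n a' b').
- case: n hn => [|[|m]] //= hn.
  apply: (Br_step (Y := X m)); apply: IH.
  by rewrite doubleS in hn.
Qed.


Lemma frac_le x y c d : 0 < c -> 0 < d -> x * d <= y * c -> x * (1 / c) <= y * (1 / d).
Proof.
move=> hc hd h.
have -> : x * (1 / c) = (x * d) * / (c * d) by field; lra.
have -> : y * (1 / d) = (y * c) * / (c * d) by field; lra.
apply: Rmult_le_compat_r => //; left; apply: Rinv_0_lt_compat; nra.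
Qed.

Lemma pow_le_one x n : 0 <= x <= 1 -> x ^ n <= 1.
Proof.
move=> hx; elim: n => [|n IH] /=; first lra.
have : 0 <= x ^ n by apply: pow_le; lra.
nra.
Qed.

Definition Mb := \big[Rplus/0]_(w : T) z.
Definition q := Mb / (1 + Mb).

Lemma Mb_nonneg : 0 <= Mb.
Proof. rewrite /Mb; apply: big_ind => //; [lra | move=> x y; lra | move=> *; lra]. Qed.

Lemma sumR_leM Y u v : enn Y -> (forall a b, adj a b -> Y a b <= z) -> sumR Y u v <= Mb.
Proof.
move=> HY HYz; rewrite /sumR /Mb big_mkcond /=.
apply: (big_ind2 (fun x y => x <= y)) => //; first lra.
- by move=> x1 x2 y1 y2; lra.
- move=> w _; case: ifP => [/andP [h _]|_]; last lra.
  by apply: HYz; rewrite adj_sym.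
Qed.

Lemma q_bounds : 0 <= q < 1.
Proof.
have hM := Mb_nonneg; rewrite /q; split.
- apply: Rmult_le_pos => //; left; apply: Rinv_0_lt_compat; lra.
- apply (Rmult_lt_reg_r (1 + Mb)); first lra.
  rewrite /Rdiv Rmult_assoc Rinv_l; lra.
Qed.

Lemma q_eq : q * (1 + Mb) = Mb.
Proof. have hM := Mb_nonneg; rewrite /q; field; lra. Qed.

Lemma gap t : forall a b, adj a b -> (1 - q ^ t) * X (t.*2).+1 a b <= X (t.*2) a b.
Proof.
elim: t => [|t IH] a b hab.
- rewrite /=; lra.
- have hq := q_bounds; have hqe := q_eq; have hM := Mb_nonneg.
  set lo := X t.*2; set hi := X t.*2.+1.
  have hp : 0 <= q ^ t <= 1.
    split; first by apply: pow_le; lra.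
    by apply: pow_le_one; lra.
  set A := sumR hi a b; set B := sumR lo a b.
  have hA0 : 0 <= A by apply: sumR_nonneg; apply: X_enn.
  have hAM : A <= Mb.
    apply: sumR_leM; first exact: X_enn.
    by move=> a' b' _; case: (X_bounds t.*2.+1 a' b').
  have hAB : (1 - q ^ t) * A <= 1 * B.
    apply: sumR_scale => a' b' h; rewrite Rmult_1_l; exact: IH.
  have hkey1 : A * (1 - q) - q <= 0.
    have : (A * (1 - q) - q) * (1 + Mb) <= 0 by nra.
    move=> h; nra.
  have hkey : (1 - q * q ^ t) * (1 + A) <= 1 * (1 + B) by nra.
  have hF : (1 - q * q ^ t) * F lo a b <= F hi a b.
    rewrite /zRmap !RmapE -/A -/B.
    have := frac_le (x := 1 - q * q ^ t) (y := 1) (c := 1 + B) (d := 1 + A).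
    have hB : 0 <= B by apply: sumR_nonneg; apply: X_enn.
    move=> /(_ ltac:(lra) ltac:(lra) hkey) h; nra.
  have hdec : X (t.+1).*2.+1 a b <= hi a b.
    by case: (Br_X (t := t) (n := (t.+1).*2.+1) ltac:(rewrite doubleS; lia) hab).
  have hpos : 0 <= 1 - q * q ^ t by nra.
  change ((1 - q * q ^ t) * X (t.+1).*2.+1 a b <= F hi a b).
  have : F lo a b = hi a b by [].
  nra.
Qed.

Lemma gap2 t a b : adj a b -> X t.*2.+1 a b - X t.*2 a b <= q ^ t * z.
Proof.
move=> hab; have := gap t hab; have := X_bounds t.*2.+1 a b.
have hq := q_bounds.
have : 0 <= q ^ t by apply: pow_le; lra.
nra.
Qed.

Lemma small d : (forall t, Rabs d <= q ^ t * z) -> d = 0.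
Proof.
move=> H; case: (Req_dec d 0) => // hd; exfalso.
have hd' : 0 < Rabs d by apply: Rabs_pos_lt.
have hq := q_bounds.
have hq1 : Rabs q < 1 by rewrite Rabs_right; lra.
have [N HN] := pow_lt_1_zero _ hq1 (Rabs d / z) ltac:(apply: Rdiv_lt_0_compat; lra).
have := HN N (le_n _); have := H N.
rewrite (Rabs_right (q ^ N)); last by apply: Rle_ge; apply: pow_le; lra.
move=> h1 h2.
have : q ^ N * z < Rabs d / z * z by apply: Rmult_lt_compat_r.
have -> : Rabs d / z * z = Rabs d by field; lra.
lra.
Qed.

Lemma lim_le (s : nat -> R) l c N : Un_cv s l -> (forall n, (N <= n)%N -> s n <= c) -> l <= c.
Proof.
move=> Hs Hc; case: (Rle_lt_dec l c) => // hlc; exfalso.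
have [N' HN'] := Hs (l - c) ltac:(lra).
have := HN' (N + N')%N ltac:(lia); rewrite /Rdist => /Rabs_def2 [h1 h2].
have := Hc (N + N')%N (leq_addr _ _); lra.
Qed.

Lemma lim_ge (s : nat -> R) l c N : Un_cv s l -> (forall n, (N <= n)%N -> c <= s n) -> c <= l.
Proof.
move=> Hs Hc; case: (Rle_lt_dec c l) => // hlc; exfalso.
have [N' HN'] := Hs (c - l) ltac:(lra).
have := HN' (N + N')%N ltac:(lia); rewrite /Rdist => /Rabs_def2 [h1 h2].
have := Hc (N + N')%N (leq_addr _ _); lra.
Qed.

Lemma X_cauchy a b : adj a b -> Cauchy_crit (fun n => X n a b).
Proof.
move=> hab eps heps.
have hq := q_bounds.
have hq1 : Rabs q < 1 by rewrite Rabs_right; lra.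
have [N HN] := pow_lt_1_zero _ hq1 (eps / z) ltac:(apply: Rdiv_lt_0_compat; lra).
exists N.*2 => n m hn hm.
have hn' : (N.*2 <= n)%N by lia.
have hm' : (N.*2 <= m)%N by lia.
have [h1 h2] := Br_X hn' hab; have [h3 h4] := Br_X hm' hab.
have := gap2 N hab.
have := HN N (le_n _).
rewrite (Rabs_right (q ^ N)); last by apply: Rle_ge; apply: pow_le; lra.
move=> h5 h6.
have : q ^ N * z < eps / z * z by apply: Rmult_lt_compat_r.
have -> : eps / z * z = eps by field; lra.
move=> h7; rewrite /Rdist; apply: Rabs_def1; lra.
Qed.

Lemma lim_exists a b : exists l, adj a b -> Un_cv (fun n => X n a b) l.
Proof.
case hab: (adj a b); last by exists 0.
have [l Hl] := R_complete _ (X_cauchy hab); by exists l.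
Qed.

Lemma Br_lim L : (forall a b, adj a b -> Un_cv (fun n => X n a b) (L a b)) -> forall t, Br t L.
Proof.
move=> HL t a b hab; split.
- apply: (lim_ge (N := t.*2) (HL a b hab)) => n hn; by case: (Br_X hn hab).
- apply: (lim_le (N := t.*2) (HL a b hab)) => n hn; by case: (Br_X hn hab).
Qed.

Lemma Br_enn t Y : Br t Y -> enn Y.
Proof. move=> HB a b hab; have := HB a b hab; have := X_bounds t.*2 a b; lra. Qed.

Lemma Br_unique Y Y' : (forall t, Br t Y) -> (forall t, Br t Y') ->
  forall a b, adj a b -> Y a b = Y' a b.
Proof.
move=> HY HY' a b hab; apply: Rminus_diag_uniq; apply: small => t.
have := HY t a b hab; have := HY' t a b hab; have := gap2 t hab.
move=> h1 h2 h3; apply: Rabs_le; lra.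
Qed.

Lemma Br_fix L : (forall t, Br t L) -> forall t, Br t (F L).
Proof.
move=> HL t a b hab.
have HLn := Br_enn (HL t).
have e1 : ele (X t.*2) L by move=> a' b' h; case: (HL t a' b' h).
have e2 : ele L (X t.*2.+1) by move=> a' b' h; case: (HL t a' b' h).
have u1 : F L a b <= X t.*2.+1 a b by apply: F_anti => //; apply: X_enn.
have u2 : X t.*2.+2 a b <= F L a b by apply: F_anti.
have u3 := Br_X (t := t) (n := t.*2.+2) ltac:(lia) hab.
split; first lra; exact u1.
Qed.

Lemma fix_Br Y : enn Y -> (forall a b, adj a b -> Y a b = F Y a b) -> forall t, Br t Y.
Proof.
move=> HYn HY; elim=> [|t IH] a b hab.
- split; first by have := HYn a b hab; simpl; lra.
  rewrite HY //; apply: F_anti; first by move=> ? ? _ /=; lra.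
  by move=> a' b' h /=; apply: HYn.
- have := Br_step IH hab.
  have HFY : forall a' b', adj a' b' -> F Y a' b' = Y a' b' by move=> a' b' h; rewrite -HY.
  have -> : F (F Y) a b = Y a b.
    by rewrite (zRmap_ext _ HFY) -HY.
  done.
Qed.

Definition Good (Y : T -> T -> R) :=
  (forall u v, adj u v -> 0 < Y u v /\ Y u v = F Y u v) /\
  (forall X' : T -> T -> R,
     (forall u v, adj u v -> 0 <= X' u v /\ X' u v = F X' u v) ->
     forall u v, adj u v -> X' u v = Y u v) /\
  (forall u v, adj u v -> Un_cv (fun t => X t u v) (Y u v)).

Lemma good_exists : exists Y, Good Y.
Proof.
pose L a b := proj1_sig (constructive_indefinite_description _ (lim_exists a b)).
have HL : forall a b, adj a b -> Un_cv (fun n => X n a b) (L a b).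
  move=> a b; exact: (proj2_sig (constructive_indefinite_description _ (lim_exists a b))).
have HB := Br_lim HL.
have HFL : forall a b, adj a b -> L a b = F L a b.
  by apply: Br_unique => //; apply: Br_fix.
exists L; split; [|split] => //.
- move=> u v huv; split => //; rewrite HFL //; apply: (proj1 (F_bounds u v (Br_enn (HB 0%N)))).
- move=> X' HX' u v huv; apply: Br_unique => //; apply: fix_Br.
  + by move=> a b h; case: (HX' a b h).
  + by move=> a b h; case: (HX' a b h).
Qed.

End Z.

Lemma iter_mono z1 z2 : 0 < z1 -> z1 <= z2 -> forall t a b,
  BP_iter adj z1 t a b <= BP_iter adj z2 t a b /\
  z1 * BP_iter adj z2 t a b <= z2 * BP_iter adj z1 t a b.
Proof.
move=> h1 h12; elim=> [|t IH] a b /=; first lra.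
have h2 : 0 < z2 by lra.
set X1 := BP_iter adj z1 t; set X2 := BP_iter adj z2 t.
have e1 : ele X1 X2 by move=> a' b' _; case: (IH a' b').
have e2 : forall a' b', adj a' b' -> z1 * X2 a' b' <= z2 * X1 a' b' by move=> a' b' _; case: (IH a' b').
have n1 : enn X1 by apply: X_enn.
have n2 : enn X2 by apply: X_enn.
have s12 := sumR_le e1 a b.
have s21 := sumR_scale e2 a b.
have s1 := sumR_nonneg n1 a b.
rewrite /zRmap !RmapE; split.
- apply: frac_le; lra.
- have := inv_anti s1 s12.
  set p2 := 1 / (1 + _); set p1 := 1 / (1 + sumR X1 a b) => hp.
  have -> : z1 * (z2 * p2) = (z1 * z2) * p2 by ring.
  have -> : z2 * (z1 * p1) = (z1 * z2) * p1 by ring.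
  apply: Rmult_le_compat_l => //; nra.
Qed.

Lemma cv_scale (s : nat -> R) l c : Un_cv s l -> Un_cv (fun n => c * s n) (c * l).
Proof.
move=> Hs; apply: (CV_mult (fun _ => c) s) => // eps heps; exists 0%nat => n _.
rewrite /Rdist Rminus_diag Rabs_R0; lra.
Qed.

Lemma Good_mono z1 z2 Y1 Y2 : 0 < z1 -> z1 <= z2 -> Good z1 Y1 -> Good z2 Y2 ->
  forall u v, adj u v -> Y1 u v <= Y2 u v /\ Y2 u v / z2 <= Y1 u v / z1.
Proof.
move=> h1 h12 [_ [_ G1]] [_ [_ G2]] u v huv.
have hm := iter_mono h1 h12.
split.
- apply: (Rle_cv_lim _ (G1 u v huv) (G2 u v huv)) => n; by case: (hm n u v).
- have H : z1 * Y2 u v <= z2 * Y1 u v.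
    apply: (Rle_cv_lim _ (cv_scale z1 (G2 u v huv)) (cv_scale z2 (G1 u v huv))) => n.
    by case: (hm n u v).
  have -> : Y2 u v / z2 = (z1 * Y2 u v) * / (z1 * z2) by field; lra.
  have -> : Y1 u v / z1 = (z2 * Y1 u v) * / (z1 * z2) by field; lra.
  apply: Rmult_le_compat_r => //; left; apply: Rinv_0_lt_compat; nra.
Qed.

End Analytic.
Section Comb.
Variables (T : finType) (adj : rel T).
Hypothesis adj_sym : forall u v, adj u v = adj v u.
Hypothesis adj_irr : forall u, adj u u = false.

Lemma is_edgeP e : reflect (exists x y, adj x y /\ e = [set x; y]) (is_edge adj e).
Proof.
apply: (iffP existsP) => [[x /existsP [y /andP [h /eqP ->]]]|[x [y [h ->]]]].
- by exists x, y.
- exists x; apply/existsP; exists y; by rewrite h eqxx.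
Qed.

Lemma matchingP M : is_matching adj M <->
  (forall e, e \in M -> is_edge adj e) /\
  (forall x e1 e2, e1 \in M -> e2 \in M -> x \in e1 -> x \in e2 -> e1 = e2).
Proof.
rewrite /is_matching; split.
- move=> /andP [/forallP H1 /forallP H2]; split.
  + by move=> e he; have := H1 e; rewrite he.
  + move=> x e1 e2 h1 h2 x1 x2; have /card_le1_eqP H := H2 x.
    apply: H; by rewrite inE ?h1 ?h2 ?x1 ?x2.
- move=> [H1 H2]; apply/andP; split.
  + apply/forallP => e; apply/implyP; exact: H1.
  + apply/forallP => x; apply/card_le1_eqP => e1 e2; rewrite !inE => /andP [h1 x1] /andP [h2 x2].
    exact: (H2 x).
Qed.

Definition avoids (S : {set T}) (M : {set {set T}}) :=
  [forall e in M, [forall x in e, x \notin S]].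

Lemma avoidsP (S : {set T}) (M : {set {set T}}) : reflect (forall e x, e \in M -> x \in e -> x \notin S) (avoids S M).
Proof.
apply: (iffP forallP) => H.
- move=> e x he hx; have := H e; rewrite he /= => /forallP /(_ x); by rewrite hx.
- move=> e; apply/implyP => he; apply/forallP => x; apply/implyP => hx; exact: (H e x he hx).
Qed.

Lemma set2C (a b : T) : [set a; b] = [set b; a].
Proof. by apply/setP => t; rewrite !in_set2 orbC. Qed.

Lemma edge_other (e : {set T}) x : is_edge adj e -> x \in e -> exists y, adj x y /\ e = [set x; y].
Proof.
move=> /is_edgeP [a [b [hab ->]]] /set2P [->|->].
- by exists b.
- by exists a; rewrite adj_sym set2C.
Qed.

Lemma adj_neq x y : adj x y -> x != y.
Proof. by move=> h; apply/eqP => exy; move: h; rewrite exy adj_irr. Qed.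

Lemma pair_inj (u v w : T) : u != v -> [set u; v] = [set u; w] -> v = w.
Proof.
move=> huv he; have : v \in [set u; w] by rewrite -he set22.
by case/set2P => // evu; move: huv; rewrite evu eqxx.
Qed.

Lemma matching_sub (M M' : {set {set T}}) : is_matching adj M -> M' \subset M -> is_matching adj M'.
Proof.
move=> /matchingP [H1 H2] /subsetP hs; apply/matchingP; split.
- by move=> e he; apply: H1; apply: hs.
- by move=> x e1 e2 h1 h2; apply: H2; apply: hs.
Qed.

Variable z : R.
Hypothesis zpos : 0 < z.

Definition Zs (S : {set T}) : R :=
  \big[Rplus/0]_(M : {set {set T}} | is_matching adj M && avoids S M) z ^ #|M|.

Lemma edge_pred u w (S : {set T}) (M' : {set {set T}}) : adj u w -> u \notin S -> w \notin S ->
  (is_matching adj ([set u; w] |: M') && avoids S ([set u; w] |: M')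
     && ([set u; w] \in [set u; w] |: M'))
  && (([set u; w] |: M') :\ [set u; w] == M')
  = is_matching adj M' && avoids ([set u; w] :|: S) M'.
Proof.
move=> huw hu hw; set e := [set u; w].
have eM : avoids (e :|: S) M' -> e \notin M'.
  move=> /avoidsP H; apply/negP => he.
  have := H e u he (set21 _ _); by rewrite in_setU set21.
apply/idP/idP.
- move=> /andP [/andP [/andP [Hm Ha] _] /eqP Hd].
  have enM : e \notin M' by rewrite -Hd setD11.
  have Hm' : is_matching adj M' by apply: (matching_sub Hm); exact: subsetUr.
  rewrite Hm' /=; apply/avoidsP => f x hf hx.
  rewrite in_setU negb_or; apply/andP; split.
  + apply/negP => hxe; move/matchingP: Hm => [_ H2].
    have hfe : f = e := H2 x f e (setU1r _ hf) (setU11 _ _) hx hxe.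
    by move: enM; rewrite -hfe hf.
  + by move/avoidsP: Ha => Ha; apply: (Ha f x (setU1r _ hf) hx).
- move=> /andP [Hm' Ha']; have enM := eM Ha'.
  move/matchingP: (Hm') => [H1 H2].
  move/avoidsP: (Ha') => Ha''.
  rewrite setU11 setU1K // eqxx andbT andbT; apply/andP; split.
  + apply/matchingP; split.
    * move=> f /setU1P [->|hf]; last exact: H1.
      by apply/is_edgeP; exists u, w.
    * move=> x e1 e2 /setU1P [->|h1] /setU1P [->|h2] x1 x2 //.
      - by have := Ha'' e2 x h2 x2; rewrite in_setU x1.
      - by have := Ha'' e1 x h1 x1; rewrite in_setU x2.
      - exact: (H2 x).
  + apply/avoidsP => f x /setU1P [->|hf] hx.
    * by case/set2P: hx => ->.
    * by have := Ha'' f x hf hx; rewrite in_setU negb_or => /andP [].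
Qed.

Lemma edge_sum u w (S : {set T}) : adj u w -> u \notin S -> w \notin S ->
  \big[Rplus/0]_(M : {set {set T}} | is_matching adj M && avoids S M && ([set u; w] \in M)) z ^ #|M|
  = z * Zs ([set u; w] :|: S).
Proof.
move=> huw hu hw; set e := [set u; w].
rewrite (reindex_onto (fun M' => e |: M') (fun M => M :\ e)); last first.
  by move=> M /andP [_ he]; apply: setD1K.
rewrite /Zs big_distrr /=.
apply: eq_big => [M'|M']; first exact: edge_pred.
rewrite edge_pred // => /andP [_ /avoidsP Ha].
have enM : e \notin M'.
  apply/negP => he; have := Ha e u he (set21 _ _); by rewrite in_setU set21.
by rewrite cardsU1 enM add1n.
Qed.

Definition partner (u : T) (M : {set {set T}}) := odflt u [pick w | [set u; w] \in M].

Lemma pair_edge_neq (u w : T) : is_edge adj [set u; w] -> u != w.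
Proof.
move=> /is_edgeP [x [y [hxy he]]]; apply/eqP => euw.
have hx : x \in [set u; w] by rewrite he set21.
have hy : y \in [set u; w] by rewrite he set22.
move: hx hy; rewrite -euw !in_set2 !orbb => /eqP hx /eqP hy.
by move: hxy; rewrite hx hy adj_irr.
Qed.

Lemma pair_edge_adj (u w : T) : is_edge adj [set u; w] -> adj u w.
Proof.
move=> he; have := edge_other he (set21 u w) => [[y [huy e]]].
have hne := pair_edge_neq he.
by rewrite (pair_inj hne e).
Qed.

Lemma partner_u (u : T) (S : {set T}) M : is_matching adj M ->
  (avoids S M && (partner u M == u)) = avoids (u |: S) M.
Proof.
move=> /matchingP [H1 H2]; rewrite /partner.
case: pickP => [w hw|hnone] /=.
- have hne := pair_edge_neq (H1 _ hw).
  rewrite eq_sym (negbTE hne) andbF; apply/esym/negP => /avoidsP H.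
  by have := H _ u hw (set21 _ _); rewrite setU11.
- rewrite eqxx andbT; apply/idP/idP.
  + move=> /avoidsP H; apply/avoidsP => e x he hx; rewrite in_setU1 negb_or (H e x he hx) andbT.
    apply/negP => /eqP exu; rewrite exu in hx.
    have [y [_ ey]] := edge_other (H1 _ he) hx.
    by have := hnone y; rewrite -ey he.
  + move=> /avoidsP H; apply/avoidsP => e x he hx.
    by have := H e x he hx; rewrite in_setU1 negb_or => /andP [].
Qed.

Lemma partner_j (u j : T) M : is_matching adj M -> j != u ->
  (partner u M == j) = ([set u; j] \in M).
Proof.
move=> /matchingP [H1 H2] hju; rewrite /partner.
case: pickP => [w hw|hnone] /=.
- apply/idP/idP => [/eqP <- //|hj].
  have hne := pair_edge_neq (H1 _ hw).
  have := H2 u _ _ hw hj (set21 _ _) (set21 _ _) => /(pair_inj hne) ->.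
  by [].
- by rewrite eq_sym (negbTE hju) (hnone j).
Qed.

Lemma vertex_rec u (S : {set T}) : u \notin S ->
  Zs S = Zs (u |: S) + \big[Rplus/0]_(w | adj u w && (w \notin S)) (z * Zs ([set u; w] :|: S)).
Proof.
move=> huS; rewrite {1}/Zs (partition_big (partner u) xpredT) //.
rewrite (bigD1 u) //=; congr (_ + _).
  apply: eq_bigl => M; case hM: (is_matching adj M) => //=.
  by rewrite partner_u.
rewrite big_mkcond [RHS]big_mkcond; apply: eq_bigr => j _ /=.
case: (eqVneq j u) => [->|hju] /=; first by rewrite adj_irr.
rewrite (eq_bigl (fun M => is_matching adj M && avoids S M && ([set u; j] \in M))); last first.
  move=> M; case hM: (is_matching adj M) => //=.
  by rewrite partner_j.
case: ifP => [/andP [huj hj]|hn]; first exact: edge_sum.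
apply: big_pred0 => M; apply/negP => /andP [/andP [hM /avoidsP hA] hin].
move/matchingP: hM => [H1 _].
have := pair_edge_adj (H1 _ hin) => huj.
have := hA _ j hin (set22 _ _) => hj.
by move: hn; rewrite huj hj.
Qed.

Lemma avoids_sub (S A : {set T}) M e : avoids (S :|: ~: A) M -> e \in M -> e \subset A /\ [forall x in e, x \notin S].
Proof.
move=> /avoidsP H he; split.
- apply/subsetP => x hx; have := H e x he hx; by rewrite in_setU in_setC negb_or negbK => /andP [].
- apply/forallP => x; apply/implyP => hx; have := H e x he hx; by rewrite in_setU negb_or => /andP [].
Qed.

Lemma avoids_subC (S A : {set T}) M e : avoids (S :|: A) M -> e \in M -> e \subset ~: A.
Proof.
move=> /avoidsP H he; apply/subsetP => x hx; have := H e x he hx.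
by rewrite in_setU in_setC negb_or => /andP [].
Qed.

Lemma edge_wit (e : {set T}) : is_edge adj e -> exists x, x \in e.
Proof. by move=> /is_edgeP [x [y [_ ->]]]; exists x; rewrite set21. Qed.

Lemma factor (S C : {set T}) :
  (forall x y, adj x y -> x \notin S -> y \notin S -> (x \in C) = (y \in C)) ->
  Zs S = Zs (S :|: ~: C) * Zs (S :|: C).
Proof.
move=> HC.
rewrite /Zs big_distrlr /= pair_big /=.
pose sp (M : {set {set T}}) := ([set e in M | e \subset C], [set e in M | e \subset ~: C]).
rewrite (reindex_onto (fun p : {set {set T}} * {set {set T}} => p.1 :|: p.2) sp); last first.
  move=> M /andP [/matchingP [H1 _] /avoidsP HA]; apply/setP => e; rewrite /sp /= in_setU !inE.
  case he: (e \in M) => //=.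
  have [x [y [hxy ee]]] := is_edgeP _ (H1 e he).
  have hx : x \notin S by apply: (HA e); rewrite // ee set21.
  have hy : y \notin S by apply: (HA e); rewrite // ee set22.
  have := HC x y hxy hx hy; rewrite ee => hxyC.
  case hxC: (x \in C).
  + by apply/orP; left; apply/subsetP => t /set2P [->|->] //; rewrite -hxyC.
  + apply/orP; right; apply/subsetP => t; rewrite in_setC => /set2P [->|->].
    * by rewrite hxC.
    * by rewrite -hxyC hxC.
have key : forall M1 M2 : {set {set T}},
  (is_matching adj (M1 :|: M2) && avoids S (M1 :|: M2)) && (sp (M1 :|: M2) == (M1, M2)) =
  (is_matching adj M1 && avoids (S :|: ~: C) M1) && (is_matching adj M2 && avoids (S :|: C) M2).
  move=> M1 M2; apply/idP/idP.
  - move=> /andP [/andP [Hm /avoidsP HA] /eqP Hs].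
    have E1 : [set e in M1 :|: M2 | e \subset C] = M1 by case: Hs.
    have E2 : [set e in M1 :|: M2 | e \subset ~: C] = M2 by case: Hs.
    apply/andP; split; apply/andP; split.
    + by apply: (matching_sub Hm); apply: subsetUl.
    + apply/avoidsP => e x he hx; move: (he); rewrite -E1 inE => /andP [heU /subsetP hsub].
      rewrite in_setU negb_or (HA e x heU hx) /= in_setC negbK; exact: hsub.
    + by apply: (matching_sub Hm); apply: subsetUr.
    + apply/avoidsP => e x he hx; move: (he); rewrite -E2 inE => /andP [heU /subsetP hsub].
      rewrite in_setU negb_or (HA e x heU hx) /=.
      by have := hsub x hx; rewrite in_setC.
  - move=> /andP [/andP [Hm1 Ha1] /andP [Hm2 Ha2]].
    move/matchingP: (Hm1) => [E1 U1]; move/matchingP: (Hm2) => [E2 U2].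
    have s1 : forall e, e \in M1 -> e \subset C by move=> e he; case: (avoids_sub Ha1 he).
    have s2 : forall e, e \in M2 -> e \subset ~: C by move=> e he; apply: (avoids_subC Ha2 he).
    have n12 : forall e, e \in M1 -> e \in M2 -> False.
      move=> e h1 h2; have [x hx] := edge_wit (E1 e h1).
      have := subsetP (s1 e h1) x hx; have := subsetP (s2 e h2) x hx.
      by rewrite in_setC => /negbTE ->.
    apply/andP; split; first (apply/andP; split).
    + apply/matchingP; split.
      * by move=> e /setUP [h|h]; [apply: E1 | apply: E2].
      * move=> x e1 e2 /setUP [h1|h1] /setUP [h2|h2] x1 x2.
        -- exact: (U1 x).
        -- exfalso; have := subsetP (s1 e1 h1) x x1; have := subsetP (s2 e2 h2) x x2.
           by rewrite in_setC => /negbTE ->.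
        -- exfalso; have := subsetP (s2 e1 h1) x x1; have := subsetP (s1 e2 h2) x x2.
           by rewrite in_setC => ->.
        -- exact: (U2 x).
    + apply/avoidsP => e x /setUP [h|h] hx.
      * by case: (avoids_sub Ha1 h) => _ /forallP /(_ x); rewrite hx.
      * move/avoidsP: Ha2 => Ha2; have := Ha2 e x h hx.
        by rewrite in_setU negb_or => /andP [].
    + rewrite /sp; apply/eqP; congr pair; apply/setP => e; rewrite !inE.
      * case h1: (e \in M1); first by rewrite /= (s1 e h1).
        case h2: (e \in M2) => //=; apply/negP => hsub.
        have [x hx] := edge_wit (E2 e h2).
        have := subsetP hsub x hx; have := subsetP (s2 e h2) x hx.
        by rewrite in_setC => /negbTE ->.
      * case h2: (e \in M2); first by rewrite orbT /= (s2 e h2).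
        case h1: (e \in M1) => //=; apply/negP => hsub.
        have [x hx] := edge_wit (E1 e h1).
        have := subsetP hsub x hx; have := subsetP (s1 e h1) x hx.
        by rewrite in_setC => ->.
apply: eq_big => [[M1 M2]|[M1 M2]] /=; first exact: key.
rewrite key => /andP [/andP [Hm1 Ha1] /andP [Hm2 Ha2]].
have H0 : M1 :&: M2 = set0.
  apply/setP => e; rewrite inE in_set0; apply/negP => /andP [h1 h2].
  move/matchingP: Hm1 => [E1 _].
  have [x hx] := edge_wit (E1 e h1).
  have := subsetP (proj1 (avoids_sub Ha1 h1)) x hx; have := subsetP (avoids_subC Ha2 h2) x hx.
  by rewrite in_setC => /negbTE ->.
by rewrite cardsU H0 cards0 subn0 pow_add.
Qed.

Lemma path_avoid (u : T) x p :
  path [rel a b | adj a b && (a != u) && (b != u)] x p -> forall y, y \in p -> y != u.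
Proof.
elim: p x => [|a p IH] x //= /andP [/andP [/andP [_ _] hau] hp] y.
rewrite in_cons => /orP [/eqP -> //|hy]; exact: (IH a hp).
Qed.

Lemma tree_sep (u v w : T) : ~ has_cycle adj -> adj u v -> adj u w -> v != w ->
  ~~ connect [rel a b | adj a b && (a != u) && (b != u)] v w.
Proof.
move=> Hnc huv huw hvw; apply/negP => /connectP [p hp ew].
move: ew; case: (shortenP hp) => p' hp' huniq _ ew.
apply: Hnc; exists [:: u, v & p']; split.
- rewrite /= in_cons negb_or (adj_neq huv) /=.
  have [hv1 hu1] : v \notin p' /\ uniq p' by apply/andP. rewrite hv1 hu1 !andbT.
  apply/negP => hu; have := path_avoid hp' hu; by rewrite eqxx.
- case: p' hp' huniq ew => [|a p'] //= _ _ ew; by move: hvw; rewrite ew eqxx.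
- rewrite /= rcons_path huv /=; apply/andP; split.
  + by apply: (sub_path _ hp') => a b /andP [/andP []].
  + by rewrite -ew adj_sym.
Qed.

Lemma tree_factor (u v w : T) : ~ has_cycle adj -> adj u v -> adj u w -> v != w ->
  Zs [set u; v] * Zs [set u; w] = Zs [set u] * Zs ([set u; w] :|: [set v]).
Proof.
move=> Hnc huv huw hvw.
set adj' := [rel a b | adj a b && (a != u) && (b != u)].
set C := [set x | connect adj' v x].
have hvC : v \in C by rewrite inE connect0.
have hwC : w \notin C by rewrite inE; exact: tree_sep.
have Hc : forall S : {set T}, u \in S ->
    forall x y, adj x y -> x \notin S -> y \notin S -> (x \in C) = (y \in C).
  move=> S huS x y hxy hx hy.
  have hxu : x != u by apply/eqP => e; move: hx; rewrite e huS.
  have hyu : y != u by apply/eqP => e; move: hy; rewrite e huS.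
  rewrite !inE; apply/idP/idP => h; apply: (connect_trans h); apply: connect1.
  + by rewrite /= hxy hxu hyu.
  + by rewrite /= adj_sym hxy hxu hyu.
rewrite (factor (Hc [set u; v] (set21 _ _))) (factor (Hc [set u; w] (set21 _ _))).
rewrite (factor (Hc [set u] (set11 _))).
rewrite (factor (Hc ([set u; w] :|: [set v]) ltac:(by rewrite in_setU set21))).
have e1 : [set u; v] :|: C = [set u] :|: C.
  apply/setP => x; rewrite ?in_setU ?in_set2 ?in_set1 ?in_setC; case: (eqVneq x v) => [->|] /=; last by rewrite orbF.
  by rewrite hvC !orbT.
have e2 : [set u; w] :|: ~: C = [set u] :|: ~: C.
  apply/setP => x; rewrite ?in_setU ?in_set2 ?in_set1 ?in_setC; case: (eqVneq x w) => [->|] /=; last by rewrite orbF.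
  by rewrite hwC !orbT.
have e3 : ([set u; w] :|: [set v]) :|: ~: C = [set u; v] :|: ~: C.
  apply/setP => x; rewrite ?in_setU ?in_set2 ?in_set1 ?in_setC; case: (eqVneq x w) => [->|] /=.
  + by rewrite hwC !orbT.
  + by rewrite orbF.
have e4 : ([set u; w] :|: [set v]) :|: C = [set u; w] :|: C.
  apply/setP => x; rewrite ?in_setU ?in_set2 ?in_set1 ?in_setC; case: (eqVneq x v) => [->|] /=.
  + by rewrite hvC !orbT.
  + by rewrite orbF.
rewrite e1 e2 e3 e4; ring.
Qed.

Lemma Zs_pos (S : {set T}) : 0 < Zs S.
Proof.
rewrite /Zs (bigD1 set0) /=; last first.
  apply/andP; split.
  - by apply/matchingP; split => [e|x e1 e2]; rewrite in_set0.
  - by apply/avoidsP => e x; rewrite in_set0.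
rewrite cards0 /=.
match goal with |- 0 < _ + ?r => have : 0 <= r end.
  apply: big_ind => //; [lra | move=> x y; lra | move=> M _; apply: pow_le; lra].
lra.
Qed.

Definition rho (u v : T) : R := z * Zs [set u; v] / Zs [set v].

Definition Sig (u v : T) : R :=
  \big[Rplus/0]_(w | adj u w && (w != v)) (z * Zs ([set u; w] :|: [set v])).

Lemma vr_v (u v : T) : u != v -> Zs [set v] = Zs [set u; v] + Sig u v.
Proof.
move=> huv; rewrite (vertex_rec (u := u) (S := [set v])); last by rewrite in_set1.
rewrite /Sig; congr (_ + _); apply: eq_bigl => w; by rewrite in_set1.
Qed.

Lemma sum_rho (u v : T) : ~ has_cycle adj -> adj u v ->
  \big[Rplus/0]_(w | adj u w && (w != v)) rho w u = Sig u v / Zs [set u; v].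
Proof.
move=> Hnc huv; rewrite /Sig /Rdiv big_distrl /=; apply: eq_bigr => w /andP [huw hwv].
have hpos1 := Zs_pos [set u]; have hpos2 := Zs_pos [set u; v].
have hf := tree_factor Hnc huv huw ltac:(by rewrite eq_sym).
rewrite /rho set2C.
have -> : Zs ([set u; w] :|: [set v]) = Zs [set u; v] * Zs [set u; w] / Zs [set u].
  rewrite hf; field; lra.
field; lra.
Qed.

Lemma Rmap_rho (u v : T) : ~ has_cycle adj -> adj u v -> Rmap adj rho u v = Zs [set u; v] / Zs [set v].
Proof.
move=> Hnc huv; rewrite /Rmap sum_rho // (vr_v (adj_neq huv)).
have := Zs_pos [set u; v]; have : 0 <= Sig u v.
  apply: big_ind => //; [lra | move=> x y; lra | move=> w _; have := Zs_pos ([set u; w] :|: [set v]); nra].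
move=> h1 h2; field; lra.
Qed.

Lemma rho_fix (u v : T) : ~ has_cycle adj -> adj u v -> rho u v = zRmap adj z rho u v.
Proof.
move=> Hnc huv; rewrite /zRmap Rmap_rho // /rho; rewrite /Rdiv; ring.
Qed.

Lemma rho_pos (u v : T) : 0 < rho u v.
Proof.
rewrite /rho; have := Zs_pos [set u; v]; have := Zs_pos [set v] => h1 h2.
apply: Rdiv_lt_0_compat => //; nra.
Qed.

Lemma edge_formula (u v : T) : ~ has_cycle adj -> adj u v ->
  edge_prob adj z [set u; v] =
  rho u v * Rmap adj rho v u / (1 + rho u v * Rmap adj rho v u).
Proof.
move=> Hnc huv.
have hvu : adj v u by rewrite adj_sym.
rewrite (Rmap_rho Hnc hvu) [in [set v; u]]set2C.
have huv' := adj_neq huv.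
have num : \big[Rplus/0]_(M : {set {set T}} | is_matching adj M && ([set u; v] \in M)) z ^ #|M|
  = z * Zs [set u; v].
  rewrite -(setU0 [set u; v]) -edge_sum ?in_set0 //; apply: eq_bigl => M.
  case: (is_matching adj M) => //=; rewrite setU0.
  suff -> : avoids set0 M by [].
  by apply/avoidsP => e x _ _; rewrite in_set0.
have den : matching_poly adj z = Zs set0.
  rewrite /matching_poly /Zs; apply: eq_bigl => M.
  suff -> : avoids set0 M by rewrite andbT.
  by apply/avoidsP => e x _ _; rewrite in_set0.
rewrite /edge_prob num den.
set a := Zs [set u]; set b := Zs [set v]; set c := Zs [set u; v].
set D := \big[Rplus/0]_(w | adj u w && (w != v)) (z * Zs [set u; w]).
have hZ0 : Zs set0 = a + z * c + D.
  rewrite (vertex_rec (u := u) (S := set0)) ?in_set0 // setU0 -/a.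
  rewrite (bigD1 v) /=; last by rewrite huv in_set0.
  rewrite setU0 -/c Rplus_assoc; congr (_ + (_ + _)).
  apply: eq_big => [w|w _]; first by rewrite in_set0 andbT.
  by rewrite setU0.
have hb : b = c + Sig u v by rewrite /b /c; apply: vr_v.
have hrel : c * D = a * Sig u v.
  rewrite /D /Sig !big_distrr /=; apply: eq_bigr => w /andP [huw hwv].
  have hf := tree_factor Hnc huv huw ltac:(by rewrite eq_sym).
  rewrite -/a -/c in hf.
  have -> : c * (z * Zs [set u; w]) = z * (c * Zs [set u; w]) by ring.
  rewrite hf; ring.
have ha := Zs_pos [set u]; have hbp := Zs_pos [set v]; have hc := Zs_pos [set u; v].
rewrite -/a -/b -/c in ha hbp hc.
have hD : 0 <= D.
  apply: big_ind => //; [lra | move=> x y; lra | move=> w _; have := Zs_pos [set u; w]; nra].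
have hS : 0 <= Sig u v.
  apply: big_ind => //; [lra | move=> x y; lra | move=> w _; have := Zs_pos ([set u; w] :|: [set v]); nra].
have hk : c * (a + z * c + D) = a * b + z * c * c.
  rewrite hb; ring_simplify; rewrite hrel; ring.
have hZ : a + z * c + D = (a * b + z * c * c) / c.
  apply: (Rmult_eq_reg_l c); last lra.
  rewrite hk; field; lra.
rewrite hZ0 hZ.
have h1 : a * b + z * c * c <> 0 by nra.
have hr : rho u v = z * c / b by [].
rewrite hr; field; repeat split; lra.
Qed.

End Comb.

Theorem proposition6 (T : finType) (adj : rel T) (HG : simple_graph adj) :
  exists Y : R -> T -> T -> R,
    (* (i) existence of a positive solution, uniqueness among nonnegative
       solutions, attractivity of the iteration from 0 *)
    (forall z, 0 < z ->
       (forall u v, adj u v -> 0 < Y z u v /\ Y z u v = zRmap adj z (Y z) u v) /\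
       (forall X : T -> T -> R,
          (forall u v, adj u v -> 0 <= X u v /\ X u v = zRmap adj z X u v) ->
          forall u v, adj u v -> X u v = Y z u v) /\
       (forall u v, adj u v -> Un_cv (fun t => BP_iter adj z t u v) (Y z u v))) /\
    (* (ii) monotonicity *)
    (forall z1 z2, 0 < z1 -> z1 <= z2 -> forall u v, adj u v ->
       Y z1 u v <= Y z2 u v /\ Y z2 u v / z2 <= Y z1 u v / z1) /\
    (* (iii) edge marginals on trees *)
    (is_tree adj -> forall z, 0 < z -> forall u v, adj u v ->
       edge_prob adj z [set u; v] =
         Y z u v * Rmap adj (Y z) v u / (1 + Y z u v * Rmap adj (Y z) v u)).
Proof.
case: HG => Hsym Hirr.
pose Y z := epsilon (inhabits (fun _ _ : T => 0)) (Good adj z).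
have HY : forall z, 0 < z -> Good adj z (Y z).
  move=> z hz; apply: epsilon_spec; exact: (good_exists Hsym hz).
exists Y; split; [|split].
- move=> z hz; exact: HY z hz.
- move=> z1 z2 h1 h12 u v huv.
  exact: (Good_mono Hsym h1 h12 (HY z1 h1) (HY z2 ltac:(lra)) huv).
- move=> [_ Hnc] z hz u v huv.
  have [_ [Huniq _]] := HY z hz.
  have E : forall a b, adj a b -> rho adj z a b = Y z a b.
    apply: Huniq => a b hab; split.
    + by apply: Rlt_le; apply: rho_pos.
    + exact: rho_fix.
  rewrite (edge_formula Hsym Hirr hz Hnc huv) (E u v huv).
  by rewrite (Rmap_ext Hsym E).
Qed.
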